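(* Let $N\ge 1$ be an integer and let $a(1),a(2),\dots$ be a sequence of real numbers such that $a(n+m)\le a(n)+a(m)$ holds for all integers $n,m$ with $N\le n\le m\le 2n$. Then $\lim_{n\to\infty} a(n)/n$ exists (possibly $-\infty$) and $$\lim_{n\to\infty}\frac{a(n)}{n}=\inf_{k\ge N}\frac{a(k)}{k}.$$ *)

(* Defs.v *)
From Stdlib Require Import Reals Lra Lia.
Open Scope R_scope.

Definition ratio_set (a : nat -> R) (N : nat) : R -> Prop :=
  fun x => exists k : nat, (N <= k)%nat /\ x = a k / INR k.

Definition is_lower_bound (E : R -> Prop) (m : R) : Prop :=
  forall x, E x -> m <= x.

Definition is_glb (E : R -> Prop) (m : R) : Prop :=
  is_lower_bound E m /\ (forall b, is_lower_bound E b -> b <= m).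

Definition cv_minfty (u : nat -> R) : Prop :=
  forall M : R, exists n0 : nat, forall n : nat, (n >= n0)%nat -> u n < M.

(* Main.v *)
Require Import Defs.
From Stdlib Require Import Reals Lra Lia Classical Arith.
Open Scope R_scope.

Section Aux.
Variable (N : nat) (b : nat -> R).
Hypothesis hN : (1 <= N)%nat.
Hypothesis hsub : forall n m : nat, (N <= n)%nat -> (n <= m)%nat -> (m <= 2 * n)%nat ->
            b (n + m)%nat <= b n + b m.

Lemma mult_nonpos (k : nat) : (N <= k)%nat -> b k <= 0 ->
  forall J j, (j <= J)%nat -> (1 <= j)%nat -> b (j * k)%nat <= 0.
Proof.
  intros hk hbk J. induction J as [|J IH]; intros j hj h1.
  - lia.
  - destruct (Nat.eq_dec j 1) as [->|hne].
    + rewrite Nat.mul_1_l; auto.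
    + set (j1 := (j / 2)%nat). set (j2 := (j - j1)%nat).
      assert (hd := Nat.div_mod j 2 ltac:(lia)).
      assert (hm := Nat.mod_upper_bound j 2 ltac:(lia)).
      fold j1 in hd.
      assert (1 <= j1)%nat by lia.
      assert (E : (j * k = j1 * k + j2 * k)%nat) by (unfold j2; nia).
      rewrite E.
      eapply Rle_trans. apply hsub; nia.
      assert (b (j1 * k)%nat <= 0) by (apply IH; lia).
      assert (b (j2 * k)%nat <= 0) by (apply IH; lia).
      lra.
Qed.

Fixpoint Mx (t : nat) : R := match t with 0%nat => b 0 | S t' => Rmax (Mx t') (b t) end.

Lemma Mx_ge : forall T t, (t <= T)%nat -> b t <= Mx T.
Proof.
  induction T; intros t ht.
  - replace t with 0%nat by lia. simpl; lra.
  - simpl. destruct (Nat.eq_dec t (S T)) as [->|hne].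
    + apply Rmax_r.
    + eapply Rle_trans; [apply IHT; lia| apply Rmax_l].
Qed.

Lemma bounded (k : nat) : (N <= k)%nat -> b k <= 0 ->
  exists C, forall n, (N <= n)%nat -> b n <= C.
Proof.
  intros hk hbk. exists (Mx (4 * k)).
  assert (H : forall T n, (n <= T)%nat -> (N <= n)%nat -> b n <= Mx (4 * k)).
  { induction T as [|T IH]; intros n hn hNn.
    - lia.
    - destruct (le_lt_dec (4 * k) n) as [hl|hl].
      + set (j := (n / (2 * k))%nat).
        assert (hd := Nat.div_mod n (2 * k) ltac:(lia)).
        assert (hm := Nat.mod_upper_bound n (2 * k) ltac:(lia)).
        fold j in hd. set (r := (n mod (2 * k))%nat) in *.
        assert (hj : (2 <= j)%nat).
        { destruct (le_lt_dec 2 j); auto.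
          assert (2 * k * j <= 2 * k * 1)%nat by (apply Nat.mul_le_mono_l; lia). lia. }
        set (p := (j * k)%nat).
        assert (hp : (2 * k * j = 2 * p)%nat) by (unfold p; lia).
        assert (hpk : (2 * k <= p)%nat) by (unfold p; nia).
        set (s := (n - p)%nat).
        assert (En : n = (p + s)%nat) by (unfold s; lia).
        rewrite En. eapply Rle_trans. apply hsub; unfold s; lia.
        assert (b p <= 0) by (apply (mult_nonpos k hk hbk j); lia).
        assert (b s <= Mx (4 * k)) by (apply IH; unfold s; lia).
        lra.
      + apply Mx_ge; lia. }
  intros n hn. apply (H n); lia.
Qed.
End Aux.

Lemma small_eventually (C eps : R) : 0 < eps ->
  exists n0, forall n, (n >= n0)%nat -> (1 <= n)%nat /\ C / INR n < eps.
Proof.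
  intros he.
  destruct (archimed_cor1 (eps / (Rabs C + 1))) as [n0 [h1 h2]].
  { apply Rdiv_lt_0_compat; [lra|]. pose proof (Rabs_pos C); lra. }
  exists n0. intros n hn. split; [lia|].
  assert (hn0 : 0 < INR n0) by (apply lt_0_INR; lia).
  assert (hn1 : INR n0 <= INR n) by (apply le_INR; lia).
  assert (hi : / INR n <= / INR n0) by (apply Rinv_le_contravar; lra).
  assert (hpos : 0 < / INR n) by (apply Rinv_0_lt_compat; lra).
  unfold Rdiv.
  assert (hC : C <= Rabs C) by apply Rle_abs.
  assert (ha : 0 <= Rabs C) by apply Rabs_pos.
  assert (C * / INR n <= Rabs C * / INR n0) by nra.
  assert (hq : Rabs C * (eps / (Rabs C + 1)) < eps).
  { unfold Rdiv. rewrite <- Rmult_assoc.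
    assert (Rabs C * eps < eps * (Rabs C + 1)) by nra.
    apply (Rmult_lt_reg_r (Rabs C + 1)); [lra|].
    rewrite Rmult_assoc, Rinv_l by lra. lra. }
  nra.
Qed.

Lemma key (N : nat) (a : nat -> R) (hN : (1 <= N)%nat)
  (hsub : forall n m : nat, (N <= n)%nat -> (n <= m)%nat -> (m <= 2 * n)%nat ->
            a (n + m)%nat <= a n + a m) (k : nat) (hk : (N <= k)%nat) (eps : R) :
  0 < eps -> exists n0, forall n, (n >= n0)%nat -> (N <= n)%nat /\ a n / INR n < a k / INR k + eps.
Proof.
  intros he. set (c := a k / INR k).
  set (b := fun n => a n - c * INR n).
  assert (hsb : forall n m : nat, (N <= n)%nat -> (n <= m)%nat -> (m <= 2 * n)%nat ->
            b (n + m)%nat <= b n + b m).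
  { intros n m h1 h2 h3. unfold b. rewrite plus_INR. pose proof (hsub n m h1 h2 h3). lra. }
  assert (hbk : b k <= 0).
  { unfold b, c. assert (0 < INR k) by (apply lt_0_INR; lia). field_simplify; lra. }
  destruct (bounded N b hN hsb k hk hbk) as [C hC].
  destruct (small_eventually C eps he) as [n0 hn0].
  exists (max n0 N). intros n hn. split; [lia|].
  destruct (hn0 n ltac:(lia)) as [h1 h2].
  assert (hpos : 0 < INR n) by (apply lt_0_INR; lia).
  specialize (hC n ltac:(lia)). unfold b in hC.
  assert (a n / INR n <= c + C / INR n).
  { unfold Rdiv. apply (Rmult_le_reg_r (INR n)); auto.
    rewrite Rmult_plus_distr_r, !Rmult_assoc, Rinv_l by lra. lra. }
  fold c. lra.
Qed.

Theorem theorem2p1 (N : nat) (a : nat -> R) (hN : (1 <= N)%nat)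
  (hsub : forall n m : nat, (N <= n)%nat -> (n <= m)%nat -> (m <= 2 * n)%nat ->
            a (n + m)%nat <= a n + a m) :
  (exists l : R, is_glb (ratio_set a N) l /\ Un_cv (fun n => a n / INR n) l)
  \/
  ((forall M : R, exists x, ratio_set a N x /\ x < M) /\
   cv_minfty (fun n => a n / INR n)).
Proof.
  destruct (classic (exists lb, is_lower_bound (ratio_set a N) lb)) as [[lb hlb]|hnb].
  - left.
    set (E := fun y => ratio_set a N (- y)).
    assert (hb : bound E).
    { exists (- lb). intros y hy. apply hlb in hy. lra. }
    assert (hne : exists y, E y).
    { exists (- (a N / INR N)). unfold E. exists N. split; [lia|]. lra. }
    destruct (completeness E hb hne) as [m [hm1 hm2]].
    assert (hglb : is_glb (ratio_set a N) (- m)).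
    { split.
      - intros x hx. assert (E (- x)) by (unfold E; rewrite Ropp_involutive; auto).
        apply hm1 in H. lra.
      - intros b0 hb0. assert (m <= - b0).
        { apply hm2. intros y hy. apply hb0 in hy. lra. }
        lra. }
    exists (- m). split; auto.
    intros eps he.
    assert (hex : exists k, (N <= k)%nat /\ a k / INR k < - m + eps / 2).
    { apply NNPP. intro hc. destruct hglb as [_ hg].
      assert (- m + eps / 2 <= - m).
      { apply hg. intros x [k [hk ->]].
        apply Rnot_lt_le. intro hlt. apply hc. exists k; auto. }
      lra. }
    destruct hex as [k [hk hk2]].
    destruct (key N a hN hsub k hk (eps / 2) ltac:(lra)) as [n0 hn0].
    exists n0. intros n hn. destruct (hn0 n ltac:(lia)) as [h1 h2].
    assert (- m <= a n / INR n) by (apply (proj1 hglb); exists n; auto).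
    unfold R_dist. rewrite Rabs_right by lra. lra.
  - right.
    assert (hM : forall M, exists x, ratio_set a N x /\ x < M).
    { intros M. apply NNPP. intro hc. apply hnb. exists M.
      intros x hx. apply Rnot_lt_le. intro hlt. apply hc. exists x; auto. }
    split; auto.
    intros M. destruct (hM (M - 1)) as [x [[k [hk ->]] hx]].
    destruct (key N a hN hsub k hk 1 ltac:(lra)) as [n0 hn0].
    exists n0. intros n hn. destruct (hn0 n hn). lra.
Qed.
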